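(* Let $E,F,W$ be finite-dimensional real inner product spaces, $\ell,\ell'\in\mathbf N$, let $L_0\in\mathrm{End}(E;F)\otimes T_\ell(\mathfrak g_1)$ be such that $\mathrm{Sym}(L_0)(D)$ is cocanceling, and let $M\in\mathrm{End}(F;W)\otimes T_{\ell'}(\mathfrak g_1)$. If there exists $\xi_0\in\mathbf R^m$ such that $\mathrm{Sym}(M)(\xi_0)$ is injective, then $\mathrm{Sym}(M\circ L_0)(D)$ is cocanceling.
   Context: $\mathfrak g_1$ is an $m$-dimensional real vector space (the first layer of the Lie algebra of a stratified homogeneous group) with basis $X_1,\dots,X_m$. $\mathcal I_j=\{1,\dots,m\}^j$; $T_j(\mathfrak g_1)$ is the $j$-fold tensor power with basis $X^\otimes_\lambda=X_{\lambda_1}\otimes\cdots\otimes X_{\lambda_j}$. For $L=\sum_{\lambda\in\mathcal I_j}B^\lambda X^\otimes_\lambda\in\mathrm{End}(E;F)\otimes T_j(\mathfrak g_1)$, $\mathrm{Sym}(L)(\xi)=\sum_\lambda\xi_{\lambda_1}\cdots\xi_{\lambda_j}B^\lambda\in\mathrm{End}(E;F)$ for $\xi\in\mathbf R^m$, and $\mathrm{Sym}(L)(D)$ is called cocanceling if $\bigcap_{\xi\in\mathbf R^m}\ker\mathrm{Sym}(L)(\xi)=\{0\}$. For $M=\sum_{\gamma'\in\mathcal I_{\ell'}}M^{\gamma'}X^\otimes_{\gamma'}$ and $L_0=\sum_{\gamma\in\mathcal I_\ell}L_0^{\gamma}X^\otimes_\gamma$, $M\circ L_0=\sum_{\gamma',\gamma}(M^{\gamma'}\circ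 L_0^\gamma)X^\otimes_{\gamma'}\otimes X^\otimes_\gamma\in\mathrm{End}(E;W)\otimes T_{\ell+\ell'}(\mathfrak g_1)$. *)

(* Defs.v *)
(* E = R^e, F = R^f, W = R^w (row vectors); an element of
   End(E;F) is a matrix 'M[R]_(e,f) acting on the right: v |-> v *m A.
   T_j(g_1) is represented by its coordinates in the basis X^⊗_λ,
   λ ∈ I_j = {1..m}^j, i.e. j.-tuple 'I_m. *)
From HB Require Import structures.
From mathcomp Require Import all_boot all_order all_algebra.
From mathcomp Require Import reals.
Set Implicit Arguments. Unset Strict Implicit. Unset Printing Implicit Defensive.
Import Order.TTheory GRing.Theory Num.Theory.
Local Open Scope ring_scope.

Definition tensorOp (R : Type) (m j a b : nat) := j.-tuple 'I_m -> 'M[R]_(a, b).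

Definition Sym (R : realType) (m j a b : nat) (L : tensorOp R m j a b)
  (xi : 'rV[R]_m) : 'M[R]_(a, b) :=
  \sum_(lam : j.-tuple 'I_m) (\prod_(i < j) xi 0 (tnth lam i)) *: L lam.

Definition cocanceling (R : realType) (m j a b : nat) (L : tensorOp R m j a b) :=
  forall v : 'rV[R]_a, (forall xi : 'rV[R]_m, v *m Sym L xi = 0) -> v = 0.

(* M ∘ L0 = Σ_{γ',γ} (M^{γ'} ∘ L0^γ) X_{γ'} ⊗ X_γ ; with the row-vector
   convention, M^{γ'} ∘ L0^γ is the matrix L0^γ *m M^{γ'}. *)
Definition tcomp (R : realType) (m l l' e f w : nat)
  (M : tensorOp R m l' f w) (L0 : tensorOp R m l e f) : tensorOp R m (l' + l) e w :=
  fun lam => \sum_(g' : l'.-tuple 'I_m) \sum_(g : l.-tuple 'I_m)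
     (if val lam == cat (val g') (val g) then L0 g *m M g' else 0).

(* Main.v *)
Require Import Defs.
From HB Require Import structures.
From mathcomp Require Import all_boot all_order all_algebra.
From mathcomp Require Import reals.
Set Implicit Arguments. Unset Strict Implicit. Unset Printing Implicit Defensive.
Import Order.TTheory GRing.Theory Num.Theory.
Local Open Scope ring_scope.

Definition SymG (S : comNzRingType) (m j a b : nat) (L : j.-tuple 'I_m -> 'M[S]_(a, b))
  (xi : 'rV[S]_m) : 'M[S]_(a, b) :=
  \sum_(lam : j.-tuple 'I_m) (\prod_(i < j) xi 0 (tnth lam i)) *: L lam.

Lemma map_SymG (S T : comNzRingType) (F : {rmorphism S -> T}) (m j a b : nat)
  (L : j.-tuple 'I_m -> 'M[S]_(a, b)) xi :
  map_mx F (SymG L xi) = SymG (fun lam => map_mx F (L lam)) (map_mx F xi).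
Proof.
rewrite /SymG map_mx_sum; apply: eq_bigr => lam _.
rewrite map_mxZ rmorph_prod; congr (_ *: _).
by apply: eq_bigr => i _; rewrite mxE.
Qed.

Lemma SymG_ext (S : comNzRingType) (m j a b : nat) (L L' : j.-tuple 'I_m -> 'M[S]_(a, b)) xi :
  (forall g, L g = L' g) -> SymG L xi = SymG L' xi.
Proof. by move=> H; apply: eq_bigr => g _; rewrite H. Qed.

Lemma evC (R : comNzRingType) (t : R) a b (A : 'M[R]_(a, b)) :
  map_mx (horner_eval t) (map_mx polyC A) = A.
Proof. by rewrite -map_mx_comp; apply: map_mx_id => x /=; rewrite horner_evalE hornerC. Qed.

Lemma poly_vanish (R : realType) (p : {poly R}) : (forall t, p.[t] = 0) -> p = 0.
Proof.
move=> H; apply: (@roots_geq_poly_eq0 _ p [seq i%:R | i <- iota 0 (size p)]).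
- by apply/allP => x /mapP [i _ ->]; apply/rootP.
- rewrite map_inj_uniq ?iota_uniq // => a b /eqP; rewrite eqr_nat => /eqP.
  done.
- by rewrite size_map size_iota.
Qed.
Lemma Sym_tcomp (R : realType) (m e f w l l' : nat)
  (L0 : tensorOp R m l e f) (M : tensorOp R m l' f w) xi :
  Sym (tcomp M L0) xi = Sym L0 xi *m Sym M xi.
Proof.
transitivity (\sum_(g' : l'.-tuple 'I_m) \sum_(g : l.-tuple 'I_m)
  ((\prod_(i < l') xi 0 (tnth g' i)) * (\prod_(i < l) xi 0 (tnth g i))) *: (L0 g *m M g')).
  rewrite /Sym /tcomp.
  under eq_bigr do rewrite scaler_sumr; rewrite exchange_big /=.
  apply: eq_bigr => g' _.
  under eq_bigr do rewrite scaler_sumr; rewrite exchange_big /=.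
  apply: eq_bigr => g _.
  under eq_bigr do rewrite [_ *: (if _ then _ else _)]fun_if scaler0.
  rewrite -big_mkcond /= (big_pred1 [tuple of g' ++ g]); last first.
    by move=> lam /=; rewrite -val_eqE.
  rewrite big_split_ord /=.
  under eq_bigr do rewrite tnth_lshift.
  by under [X in _ * X]eq_bigr do rewrite tnth_rshift.
rewrite /Sym mulmx_suml exchange_big /=; apply: eq_bigr => g' _.
rewrite mulmx_sumr; apply: eq_bigr => g _.
by rewrite -scalemxAr -scalemxAl scalerA mulrC.
Qed.

Theorem proposition6p1 (R : realType) (m e f w l l' : nat)
  (L0 : tensorOp R m l e f) (M : tensorOp R m l' f w) :
  cocanceling L0 ->
  (exists xi0 : 'rV[R]_m, injective (fun v : 'rV[R]_f => v *m Sym M xi0)) ->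
  cocanceling (tcomp M L0).
Proof.
move=> cL [xi0 inj] v Hv; apply: cL => xi.
have rf : row_free (Sym M xi0).
  rewrite -kermx_eq0; apply/eqP/row_matrixP => i; rewrite row0; apply: inj => /=.
  rewrite mul0mx; apply/sub_kermxP; exact: row_sub.
have [B AB] := row_freeP rf.
pose eta := xi - xi0.
pose xiP : 'rV[{poly R}]_m := map_mx polyC xi0 + 'X *: map_mx polyC eta.
pose Q := SymG (fun g => map_mx polyC (M g)) xiP *m map_mx polyC B.
pose P := map_mx polyC v *m SymG (fun g => map_mx polyC (L0 g)) xiP.
have evxi t : map_mx (horner_eval t) xiP = xi0 + t *: eta.
  by rewrite map_mxD map_mxZ !evC /= horner_evalE hornerX.
have evQ t : map_mx (horner_eval t) Q = Sym M (xi0 + t *: eta) *m B.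
  by rewrite map_mxM map_SymG evxi evC; congr (_ *m _); apply: SymG_ext => g; rewrite evC.
have evP t : map_mx (horner_eval t) P = v *m Sym L0 (xi0 + t *: eta).
  by rewrite map_mxM map_SymG evxi evC; congr (_ *m _); apply: SymG_ext => g; rewrite evC.
have dQ : \det Q != 0.
  apply/eqP => /(congr1 (horner_eval 0)); rewrite -det_map_mx evQ scale0r addr0 AB det1 rmorph0.
  exact/eqP/oner_neq0.
have P0 : P = 0.
  apply/rowP => j; rewrite [RHS]mxE.
  have : \det Q * P 0 j = 0.
    apply: poly_vanish => t.
    have E : P *m Q *m \adj Q = \det Q *: P by rewrite -mulmxA mul_mx_adj mul_mx_scalar.
    have E2 : map_mx (horner_eval t) (P *m Q *m \adj Q) =
      v *m Sym L0 (xi0 + t *: eta) *m (Sym M (xi0 + t *: eta) *m B) *m map_mx (horner_eval t) (\adj Q).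
      by rewrite -evP -evQ !map_mxM.
    rewrite [v *m _ *m (_ *m B)]mulmxA -[v *m _ *m Sym M _]mulmxA -Sym_tcomp Hv !mul0mx in E2.
    have := congr1 (fun X : 'rV[R]_f => X 0 j) E2; rewrite E /= !mxE /= => <-.
    by rewrite horner_evalE.
  by move/eqP; rewrite mulf_eq0 (negbTE dQ) /= => /eqP.
have := evP 1; rewrite P0 scale1r /eta addrC subrK => <-.
by rewrite map_mx0.
Qed.
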